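(* Fix a binary instance $(\mu_0,\hat q)$. There is a constant $C<\infty$, depending only on $(\mu_0,\hat q)$, such that for every $T\ge 4$ and every bias $\alpha^\star\in(0,1]$, the Safe Exploration policy satisfies $\mathrm{Reg}_T(\mathrm{SE};\alpha^\star)\le C\log\log T$. In particular one may take any $C$ proportional to $2\frac{(1-\mu_0)^2}{(\hat q-\mu_0)\hat q}+1$, times an absolute constant.
   Context: Binary model: states $\Omega=\{0,1\}$, actions $A=\{0,1\}$, prior $\mu_0=\Pr(\omega=1)\in(0,1)$, cutoff $\hat q\in(\mu_0,1)$, sender utility $u_S(a,\omega)=\mathbf 1\{a=1\}$. A receiver with fixed unknown bias $\alpha^\star\in(0,1]$ takes action $1$ after Bayesian posterior $\nu=\Pr(\omega=1\mid s)$ iff $(1-\alpha^\star)\mu_0+\alpha^\star\nu\ge\hat q$. Define $\nu_B(\alpha)=\mu_0+(\hat q-\mu_0)/\alpha$ and $\alpha_{\min}=(\hat q-\mu_0)/(1-\mu_0)$. For $\alpha\in[\alpha_{\min},1]$, let $\tau(\alpha)$ be the Bayes-plausible scheme with mass $1-\mu_0/\nu_B(\alpha)$ on posterior $0$ and mass $\mu_0/\nu_B(\alpha)$ on posterior $\nu_B(\alpha)$. Repeated interaction over $T$ rounds. In each round the sender commits to a Bayes-plausible posterior distribution, a state $\omega_t\sim\mu_0$ and posterior $\nu_t$ are realized, the receiver acts, and the sender observes $\nu_t$ and the action. Let $\mathrm{OPT}(\alpha^\star)$ be the supremum over Bayes-plausible distributions of the probability of action $1$. The regret is $\mathrm{Reg}_T=T\cdot\mathrm{OPT}(\alpha^\star)-\sum_t\mathbb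 E[\Pr(\text{action }1\text{ in round }t\mid\text{history})]$. Safe Exploration (SE) policy: initialize $\underline\alpha=\alpha_{\min}$, $\overline\alpha=1$, $\epsilon=1/2$. While $\overline\alpha-\underline\alpha>1/T$ and rounds remain, run a phase: 1. Set $m_{\rm prev}=\underline\alpha$ and $m=\underline\alpha+\epsilon$. 2. While $m\le\overline\alpha$ and rounds remain, play $\tau(m)$ for one round. If the realized posterior is nonzero: - if the receiver plays action $1$, set $m_{\rm prev}\gets m$ and $m\gets m+\epsilon$; - otherwise set $(\underline\alpha,\overline\alpha)\gets(m_{\rm prev},m)$, $\epsilon\gets\epsilon^2$, and end the phase. 3. If the inner loop ended because $m>\overline\alpha$, set $(\underline\alpha,\overline\alpha)\gets(m_{\rm prev},\overline\alpha)$ and $\epsilon\gets\epsilon^2$. After exploration ends, play $\tau(\underline\alpha)$ in all remaining rounds. *)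

(* Defs.v *)
From Stdlib Require Import Reals Lra List.
From Coquelicot Require Import Coquelicot.
Import ListNotations.
Open Scope R_scope.

(** Binary persuasion instance: prior mu0 = Pr(omega = 1), cutoff qh. *)

(* Receiver with bias a takes action 1 at Bayesian posterior nu iff
   (1-a) mu0 + a nu >= qh. *)
Definition acts (mu0 qh a nu : R) : bool :=
  if Rle_dec qh ((1 - a) * mu0 + a * nu) then true else false.

Definition ind (b : bool) : R := if b then 1 else 0.

Definition nuB (mu0 qh a : R) : R := mu0 + (qh - mu0) / a.
Definition alpha_min (mu0 qh : R) : R := (qh - mu0) / (1 - mu0).

(** Finitely supported posterior distributions: list of (weight, posterior). *)
Definition bayes_plausible (mu0 : R) (D : list (R * R)) : Prop :=
  List.Forall (fun wn => 0 <= fst wn /\ 0 <= snd wn <= 1) D /\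
  fold_right Rplus 0 (map fst D) = 1 /\
  fold_right Rplus 0 (map (fun wn => fst wn * snd wn) D) = mu0.

Definition prob_act1 (mu0 qh a : R) (D : list (R * R)) : R :=
  fold_right Rplus 0 (map (fun wn => fst wn * ind (acts mu0 qh a (snd wn))) D).

Definition OPT (mu0 qh a : R) : R :=
  real (Lub_Rbar (fun x => exists D, bayes_plausible mu0 D /\ x = prob_act1 mu0 qh a D)).

Definition tau (mu0 qh alpha : R) : list (R * R) :=
  [(1 - mu0 / nuB mu0 qh alpha, 0); (mu0 / nuB mu0 qh alpha, nuB mu0 qh alpha)].

(** State of the Safe Exploration policy at the beginning of a round. *)
Inductive se_state : Type :=
  (* inside a phase, about to play tau(m); fields lo hi eps mprev m *)
  | Explore (lo hi eps mprev m : R)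
  (* exploration over: play tau(lo) forever *)
  | Exploit (lo : R).

(* Start of the outer loop (no round consumed): check the outer condition,
   start a phase; if the phase is empty (lo + eps > hi) apply step 3
   ((lo,hi) <- (mprev,hi) = (lo,hi), eps <- eps^2) and loop again.
   The fuel is never exhausted when fuel >= T. *)
Fixpoint phase_start (T : nat) (fuel : nat) (lo hi eps : R) : se_state :=
  match fuel with
  | O => Exploit lo
  | S f =>
      if Rle_dec (hi - lo) (/ INR T) then Exploit lo
      else if Rle_dec (lo + eps) hi then Explore lo hi eps lo (lo + eps)
      else phase_start T f lo hi (eps * eps)
  end.

Definition se_init (mu0 qh : R) (T : nat) : se_state :=
  phase_start T (S T) (alpha_min mu0 qh) 1 (/ 2).

(* Transition after a round played in state Explore, given whether the
   realized posterior is nonzero (b) and the receiver's true bias astar. *)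
Definition se_next (mu0 qh astar : R) (T : nat) (lo hi eps mprev m : R)
  (b : bool) : se_state :=
  if b then
    if acts mu0 qh astar (nuB mu0 qh m) then
      if Rle_dec (m + eps) hi then Explore lo hi eps m (m + eps)
      else (* inner loop ends because m > hi: step 3 *)
        phase_start T (S T) m hi (eps * eps)
    else (* action 0: (lo,hi) <- (mprev, m), eps <- eps^2, end phase *)
      phase_start T (S T) mprev m (eps * eps)
  else Explore lo hi eps mprev m.

(* Expected total of Pr(action 1 in round | history) over the n remaining
   rounds, starting from state s (backward recursion over the random
   realized posteriors). *)
Fixpoint se_value (mu0 qh astar : R) (T : nat) (n : nat) (s : se_state) : R :=
  match n with
  | O => 0
  | S k =>
      match s with
      | Exploit lo =>
          prob_act1 mu0 qh astar (tau mu0 qh lo)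
          + se_value mu0 qh astar T k (Exploit lo)
      | Explore lo hi eps mprev m =>
          let p := mu0 / nuB mu0 qh m in
          prob_act1 mu0 qh astar (tau mu0 qh m)
          + p * se_value mu0 qh astar T k (se_next mu0 qh astar T lo hi eps mprev m true)
          + (1 - p) * se_value mu0 qh astar T k (se_next mu0 qh astar T lo hi eps mprev m false)
      end
  end.

Definition regret_SE (mu0 qh astar : R) (T : nat) : R :=
  INR T * OPT mu0 qh astar - se_value mu0 qh astar T T (se_init mu0 qh T).

(* Main.v *)
From Stdlib Require Import Reals Lra Lia Psatz List.
From Coquelicot Require Import Coquelicot.
Require Import Defs.
Import ListNotations.
Open Scope R_scope.

Lemma nuB_k mu0 qh m : 0 < m -> (qh - mu0) / m * m = qh - mu0.
Proof. intros; field; lra. Qed.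

Lemma acts_nuB mu0 qh a m : 0 < mu0 -> mu0 < qh -> 0 < a -> 0 < m ->
  (acts mu0 qh a (nuB mu0 qh m) = true -> m <= a) /\
  (acts mu0 qh a (nuB mu0 qh m) = false -> a < m).
Proof.
  intros H0 H1 Ha Hm. unfold acts, nuB.
  pose proof (nuB_k mu0 qh m Hm) as Hk.
  set (k := (qh - mu0)/m) in *.
  assert (Hkp : 0 < k) by (unfold k; apply Rdiv_lt_0_compat; lra).
  destruct (Rle_dec _ _) as [H|H]; split; intro E; try discriminate.
  - nra.
  - apply Rnot_le_lt in H. nra.
Qed.

Lemma acts0 mu0 qh a : 0 < mu0 -> mu0 < qh -> 0 < a -> acts mu0 qh a 0 = false.
Proof.
  intros. unfold acts. destruct (Rle_dec _ _); auto. nra.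
Qed.

Definition g mu0 qh x := mu0 / nuB mu0 qh x.
Definition C0 mu0 qh := (1 - mu0) ^ 2 / ((qh - mu0) * qh).

Lemma nuB_pos mu0 qh m : 0 < mu0 -> mu0 < qh -> 0 < m -> mu0 < nuB mu0 qh m.
Proof. intros. unfold nuB. assert (0 < (qh-mu0)/m) by (apply Rdiv_lt_0_compat; lra). lra. Qed.

Lemma g_bounds mu0 qh m : 0 < mu0 -> mu0 < qh -> 0 < m -> 0 < g mu0 qh m <= 1.
Proof.
  intros. pose proof (nuB_pos mu0 qh m H H0 H1). unfold g. split.
  - apply Rdiv_lt_0_compat; lra.
  - apply Rcomplements.Rle_div_l; lra.
Qed.

Lemma prob_tau mu0 qh a m : 0 < mu0 -> mu0 < qh -> 0 < a -> 0 < m ->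
  prob_act1 mu0 qh a (tau mu0 qh m) = g mu0 qh m * ind (acts mu0 qh a (nuB mu0 qh m)).
Proof.
  intros. unfold prob_act1, tau; simpl. rewrite acts0 by auto. unfold ind at 1, g. ring.
Qed.

Lemma g_mono mu0 qh x y : 0 < mu0 -> mu0 < qh -> 0 < x -> x <= y -> g mu0 qh x <= g mu0 qh y.
Proof.
  intros. unfold g, nuB.
  assert ((qh - mu0)/y <= (qh-mu0)/x).
  { unfold Rdiv. apply Rmult_le_compat_l; [lra|]. apply Rinv_le_contravar; lra. }
  assert (0 < (qh-mu0)/y) by (apply Rdiv_lt_0_compat; lra).
  apply Rmult_le_compat_l; [lra|]. apply Rinv_le_contravar; lra.
Qed.

Lemma g_lip mu0 qh a m : 0 < mu0 -> mu0 < qh -> qh < 1 ->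
  alpha_min mu0 qh <= m -> m <= a ->
  g mu0 qh a - g mu0 qh m <= g mu0 qh m * (C0 mu0 qh * (a - m)).
Proof.
  intros H0 H1 H2 Hm Ha. unfold alpha_min in Hm.
  assert (Hd : 0 < qh - mu0) by lra.
  assert (Hmp : 0 < (qh - mu0)/(1-mu0)) by (apply Rdiv_lt_0_compat; lra).
  assert (m0 : 0 < m) by lra.
  assert (Hm' : qh - mu0 <= m * (1 - mu0)).
  { apply Rcomplements.Rle_div_l in Hm; lra. }
  unfold g, C0, nuB.
  replace (mu0 + (qh - mu0) / a) with ((mu0 * a + (qh - mu0))/a) by (field; lra).
  replace (mu0 + (qh - mu0) / m) with ((mu0 * m + (qh - mu0))/m) by (field; lra).
  assert (P1 : 0 < mu0 * a + (qh - mu0)) by nra.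
  assert (P2 : 0 < mu0 * m + (qh - mu0)) by nra.
  replace (mu0 / ((mu0 * a + (qh - mu0)) / a)) with (mu0 * a / (mu0 * a + (qh - mu0))) by (field; lra).
  replace (mu0 / ((mu0 * m + (qh - mu0)) / m)) with (mu0 * m / (mu0 * m + (qh - mu0))) by (field; lra).
  replace (mu0 * a / (mu0 * a + (qh - mu0)) - mu0 * m / (mu0 * m + (qh - mu0)))
    with (mu0 * (qh - mu0) * (a - m) / ((mu0 * a + (qh - mu0)) * (mu0 * m + (qh - mu0)))) by (field; lra).
  replace (mu0 * m / (mu0 * m + (qh - mu0)) * ((1 - mu0) ^ 2 / ((qh - mu0) * qh) * (a - m)))
    with (mu0 * (a-m) * (m * (1 - mu0) ^ 2) / ((mu0 * m + (qh - mu0)) * ((qh - mu0) * qh))) by (field; lra).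
  set (P1' := mu0 * a + (qh - mu0)) in *. set (P2' := mu0 * m + (qh - mu0)) in *.
  set (D := (qh - mu0) * qh).
  assert (HD : 0 < D) by (unfold D; nra).
  assert (Hx : (qh - mu0) * D <= m * (1 - mu0) ^ 2 * P1').
  { assert (qh - mu0 <= P1' * (1 - mu0)) by (unfold P1'; assert (qh - mu0 <= a * (1 - mu0)) by nra; nra).
    unfold D.
    apply Rle_trans with ((qh - mu0) * (qh - mu0)).
    - assert (0 < (qh-mu0)*(qh-mu0)) by nra. nra.
    - replace (m * (1 - mu0) ^ 2 * P1') with ((m * (1-mu0)) * (P1' * (1 - mu0))) by ring.
      apply Rmult_le_compat; nra. }
  assert (0 <= mu0 * (a - m)) by nra.
  replace (mu0 * (qh - mu0) * (a - m) / (P1' * P2')) with ((mu0 * (a - m)) * ((qh - mu0) * D) / (P1' * P2' * D)) by (field; lra).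
  replace (mu0 * (a - m) * (m * (1 - mu0) ^ 2) / (P2' * D)) with ((mu0 * (a - m)) * (m * (1 - mu0) ^ 2 * P1') / (P1' * P2' * D)) by (field; lra).
  unfold Rdiv. apply Rmult_le_compat_r.
  { left. apply Rinv_0_lt_compat. apply Rmult_lt_0_compat; [apply Rmult_lt_0_compat|]; lra. }
  apply Rmult_le_compat_l; auto.
Qed.

Definition OPTb mu0 qh a := if Rle_dec (alpha_min mu0 qh) a then g mu0 qh a else 0.

Lemma real_lub_le (E : R -> Prop) b : 0 <= b -> (forall x, E x -> x <= b) -> real (Lub_Rbar E) <= b.
Proof.
  intros Hb HE. destruct (Lub_Rbar_correct E) as [_ H].
  assert (H' : Rbar_le (Lub_Rbar E) (Finite b)).
  { apply H. intros x Hx. simpl. auto. }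
  destruct (Lub_Rbar E); simpl in *; auto; contradiction.
Qed.

Lemma acts_ge mu0 qh a nu : 0 < mu0 -> mu0 < qh -> 0 < a ->
  acts mu0 qh a nu = true -> nuB mu0 qh a <= nu.
Proof.
  intros H0 H1 Ha. unfold acts. destruct (Rle_dec _ _) as [H|H]; intro E; try discriminate.
  unfold nuB. assert ((qh - mu0)/a <= nu - mu0); [|lra].
  apply Rcomplements.Rle_div_l; lra.
Qed.

Lemma nuB_gt1 mu0 qh a : 0 < mu0 -> mu0 < qh -> qh < 1 -> 0 < a -> a < alpha_min mu0 qh ->
  1 < nuB mu0 qh a.
Proof.
  intros. unfold alpha_min, nuB in *.
  assert (a * (1 - mu0) < qh - mu0).
  { apply Rcomplements.Rlt_div_r in H3; lra. }
  assert (1 - mu0 < (qh - mu0) / a); [|lra].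
  apply Rcomplements.Rlt_div_r; lra.
Qed.

Lemma prob_le_sum mu0 qh a D : 0 < mu0 -> mu0 < qh -> 0 < a ->
  List.Forall (fun wn => 0 <= fst wn /\ 0 <= snd wn <= 1) D ->
  prob_act1 mu0 qh a D <= fold_right Rplus 0 (map (fun wn => fst wn * snd wn) D) / nuB mu0 qh a.
Proof.
  intros H0 H1 Ha HF. pose proof (nuB_pos mu0 qh a H0 H1 Ha) as Hn.
  unfold prob_act1. induction HF as [|[w nu] D [Hw Hnu] HF IH]; simpl.
  - unfold Rdiv; lra.
  - unfold Rdiv in *. rewrite Rmult_plus_distr_r.
    apply Rplus_le_compat; auto.
    destruct (acts mu0 qh a nu) eqn:E; cbn [ind].
    + pose proof (acts_ge _ _ _ _ H0 H1 Ha E).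
      rewrite Rmult_1_r. rewrite Rmult_assoc.
      assert (1 <= nu * / nuB mu0 qh a).
      { apply Rcomplements.Rle_div_r; lra. }
      simpl in *. rewrite <- (Rmult_1_r w) at 1. apply Rmult_le_compat_l; lra.
    + simpl in *. rewrite Rmult_0_r. apply Rmult_le_pos; [apply Rmult_le_pos; lra|].
      left; apply Rinv_0_lt_compat; lra.
Qed.

Lemma prob_le_0 mu0 qh a D : 0 < mu0 -> mu0 < qh -> qh < 1 -> 0 < a -> a < alpha_min mu0 qh ->
  List.Forall (fun wn => 0 <= fst wn /\ 0 <= snd wn <= 1) D ->
  prob_act1 mu0 qh a D <= 0.
Proof.
  intros H0 H1 H2 Ha Hl HF. pose proof (nuB_gt1 mu0 qh a H0 H1 H2 Ha Hl) as Hn.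
  unfold prob_act1. induction HF as [|[w nu] D [Hw Hnu] HF IH]; simpl.
  - lra.
  - destruct (acts mu0 qh a nu) eqn:E; cbn [ind].
    + pose proof (acts_ge _ _ _ _ H0 H1 Ha E). simpl in Hnu. lra.
    + lra.
Qed.

Lemma OPT_le mu0 qh a : 0 < mu0 -> mu0 < qh -> qh < 1 -> 0 < a ->
  OPT mu0 qh a <= OPTb mu0 qh a.
Proof.
  intros H0 H1 H2 Ha. unfold OPT, OPTb.
  destruct (Rle_dec _ _) as [Hl|Hl].
  - apply real_lub_le.
    + left. apply (g_bounds mu0 qh a H0 H1 Ha).
    + intros x [D [[HF [_ Hm]] ->]].
      eapply Rle_trans. apply prob_le_sum; eauto.
      rewrite Hm. unfold g. lra.
  - apply real_lub_le; [lra|].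
    intros x [D [[HF _] ->]]. apply prob_le_0; auto. lra.
Qed.

Definition lam (T : nat) (e : R) := (ln (ln (2 * INR T ^ 2)) - ln (ln (/ e))) / ln 2.

Lemma ln2_pos : 0 < ln 2.
Proof. rewrite <- ln_1. apply ln_increasing; lra. Qed.

Lemma ln_inv_pos e : 0 < e < 1 -> 0 < ln (/ e).
Proof.
  intros. rewrite <- ln_1. apply ln_increasing; [lra|].
  rewrite <- Rinv_1. apply Rinv_lt_contravar; lra.
Qed.

Lemma lam_sq T e : 0 < e < 1 -> lam T (e * e) = lam T e - 1.
Proof.
  intros He. unfold lam. pose proof (ln_inv_pos e He). pose proof ln2_pos.
  assert (0 < / e) by (apply Rinv_0_lt_compat; lra).
  rewrite Rinv_mult, (ln_mult (/ e) (/ e)) by lra.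
  replace (ln (/ e) + ln (/ e)) with (2 * ln (/ e)) by ring.
  rewrite (ln_mult 2 (ln (/ e))) by lra. field. lra.
Qed.

Lemma lam_pos T e : (1 <= T)%nat -> 0 < e <= 1/2 -> / (2 * INR T ^ 2) < e -> 0 < lam T e.
Proof.
  intros HT He Hl. unfold lam. pose proof ln2_pos.
  apply Rdiv_lt_0_compat; auto.
  assert (HTp : 1 <= INR T) by (apply (le_INR 1); auto).
  assert (0 < 2 * INR T ^ 2) by nra.
  pose proof (ln_inv_pos e ltac:(lra)).
  assert (/ e < 2 * INR T ^ 2).
  { rewrite <- (Rinv_inv (2 * INR T ^ 2)). apply Rinv_lt_contravar; auto.
    apply Rmult_lt_0_compat; [apply Rinv_0_lt_compat; lra|lra]. }
  assert (ln (/ e) < ln (2 * INR T ^ 2)) by (apply ln_increasing; auto; apply Rinv_0_lt_compat; lra).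
  assert (ln (ln (/ e)) < ln (ln (2 * INR T ^ 2))) by (apply ln_increasing; auto).
  lra.
Qed.

Lemma INR_le_pow2 n : INR n <= 2 ^ n.
Proof.
  induction n. simpl; lra. rewrite S_INR. rewrite <- tech_pow_Rmult.
  assert (1 <= 2 ^ n) by (apply pow_R1_Rle; lra). lra.
Qed.

Lemma pow_small e T : (1 <= T)%nat -> 0 < e <= 1/2 -> e ^ (2 ^ T) <= / INR T.
Proof.
  intros HT He.
  assert (HTp : 1 <= INR T) by (apply (le_INR 1); auto).
  apply Rle_trans with ((/2) ^ (2 ^ T)).
  { apply pow_incr; lra. }
  rewrite pow_inv.
  apply Rinv_le_contravar; [lra|].
  apply Rle_trans with (INR (2 ^ T)).
  - rewrite pow_INR. simpl INR. replace (1+1) with 2 by ring. apply INR_le_pow2.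
  - apply INR_le_pow2.
Qed.

Lemma C0_pos mu0 qh : 0 < mu0 -> mu0 < qh -> qh < 1 -> 0 < C0 mu0 qh.
Proof.
  intros. unfold C0. apply Rdiv_lt_0_compat.
  - apply pow_lt; lra.
  - apply Rmult_lt_0_compat; lra.
Qed.

Definition Sf mu0 qh a eps m := C0 mu0 qh * Rsqr (Rmax 0 (a - m + eps)) / (2 * eps).

Definition Phi mu0 qh a T s := match s with
  | Exploit _ => C0 mu0 qh
  | Explore lo hi eps mprev m => Sf mu0 qh a eps m + 1 + (C0 mu0 qh + 1) * Rmax 0 (lam T eps) + C0 mu0 qh
  end.

Definition Inv mu0 qh a T s := match s with
  | Exploit lo => alpha_min mu0 qh <= lo /\ (alpha_min mu0 qh <= a -> lo <= a) /\ a - lo <= / INR T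
  | Explore lo hi eps mprev m => alpha_min mu0 qh <= lo /\ lo <= mprev /\ m = mprev + eps /\ m <= hi /\
       hi <= 1 /\ a <= hi /\ (alpha_min mu0 qh <= a -> mprev <= a) /\ 0 < eps <= 1/2
  end.

Definition PS mu0 qh a lo hi e := alpha_min mu0 qh <= lo /\ hi <= 1 /\ a <= hi /\
  (alpha_min mu0 qh <= a -> lo <= a) /\ 0 < e <= 1/2 /\ (hi - lo) ^ 2 <= 2 * e.

Lemma Sf_nonneg mu0 qh a eps m : 0 < mu0 -> mu0 < qh -> qh < 1 -> 0 < eps -> 0 <= Sf mu0 qh a eps m.
Proof.
  intros. unfold Sf. pose proof (C0_pos mu0 qh H H0 H1).
  apply Rdiv_le_0_compat; [|lra]. apply Rmult_le_pos; [lra|apply Rle_0_sqr].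
Qed.

Lemma Rmax0_nonneg x : 0 <= Rmax 0 x.
Proof. apply Rmax_l. Qed.

Lemma ps_lam mu0 qh a T lo hi e : (1 <= T)%nat -> PS mu0 qh a lo hi e -> / INR T < hi - lo -> 0 < lam T e.
Proof.
  intros HT [Hlo [Hhi [Hah [Hla [He Hsq]]]]] Hc.
  assert (HTp : 1 <= INR T) by (apply (le_INR 1); auto).
  assert (HiT : 0 < / INR T) by (apply Rinv_0_lt_compat; lra).
  apply lam_pos; auto.
  assert ((/ INR T) ^ 2 < (hi - lo) ^ 2) by (simpl; nra).
  rewrite Rinv_mult, <- pow_inv.
  assert (0 < (/ INR T) ^ 2) by (apply pow_lt; lra). lra.
Qed.

Lemma ps_exploit mu0 qh a T lo hi e : 0 < mu0 -> mu0 < qh -> qh < 1 ->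
  PS mu0 qh a lo hi e -> hi - lo <= / INR T ->
  Inv mu0 qh a T (Exploit lo) /\ Phi mu0 qh a T (Exploit lo) <= C0 mu0 qh + (C0 mu0 qh + 1) * Rmax 0 (lam T e + 1).
Proof.
  intros H0 H1 H2 [Hlo [Hhi [Hah [Hla [He Hsq]]]]] Hc. pose proof (C0_pos mu0 qh H0 H1 H2) as HC.
  split; [simpl; repeat split; auto; lra|]; simpl.
  pose proof (Rmax0_nonneg (lam T e + 1)). nra.
Qed.

Lemma ps_explore mu0 qh a T lo hi e : 0 < mu0 -> mu0 < qh -> qh < 1 -> (1 <= T)%nat ->
  PS mu0 qh a lo hi e -> / INR T < hi - lo -> lo + e <= hi ->
  Inv mu0 qh a T (Explore lo hi e lo (lo + e)) /\
  Phi mu0 qh a T (Explore lo hi e lo (lo + e)) <= C0 mu0 qh + (C0 mu0 qh + 1) * Rmax 0 (lam T e + 1).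
Proof.
  intros H0 H1 H2 HT HP Hc Hc2. pose proof (C0_pos mu0 qh H0 H1 H2) as HC.
  pose proof (ps_lam mu0 qh a T lo hi e HT HP Hc) as Hlam.
  destruct HP as [Hlo [Hhi [Hah [Hla [He Hsq]]]]].
  split; [simpl; repeat split; auto; lra|]; simpl.
  rewrite (Rmax_right 0 (lam T e)) by lra; rewrite (Rmax_right 0 (lam T e + 1)) by lra.
  assert (Sf mu0 qh a e (lo + e) <= C0 mu0 qh); [|nra].
  unfold Sf; replace (a - (lo + e) + e) with (a - lo) by ring.
  apply Rcomplements.Rle_div_l; [lra|].
  assert (Rsqr (Rmax 0 (a - lo)) <= (hi - lo) ^ 2); [|nra].
  rewrite <- Rsqr_pow2. apply Rsqr_incr_1; [apply Rmax_lub; lra|apply Rmax_l|lra].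
Qed.

Lemma ps_unfold T f lo hi e : phase_start T (S f) lo hi e =
  if Rle_dec (hi - lo) (/ INR T) then Exploit lo
  else if Rle_dec (lo + e) hi then Explore lo hi e lo (lo + e)
  else phase_start T f lo hi (e * e).
Proof. reflexivity. Qed.

Lemma ps_ok mu0 qh a T f : 0 < mu0 -> mu0 < qh -> qh < 1 -> 0 < a -> (1 <= T)%nat ->
  forall lo hi e, PS mu0 qh a lo hi e -> e ^ (2 ^ f) <= / INR T ->
  Inv mu0 qh a T (phase_start T (S f) lo hi e) /\
  Phi mu0 qh a T (phase_start T (S f) lo hi e) <= C0 mu0 qh + (C0 mu0 qh + 1) * Rmax 0 (lam T e + 1).
Proof.
  intros H0 H1 H2 Ha HT.
  induction f as [|f IH]; intros lo hi e HP Hpow; rewrite ps_unfold.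
  all: destruct (Rle_dec (hi - lo) (/ INR T)) as [Hc|Hc];
    [apply (ps_exploit mu0 qh a T lo hi e); auto|apply Rnot_le_lt in Hc].
  all: destruct (Rle_dec (lo + e) hi) as [Hc2|Hc2];
    [apply ps_explore; auto|apply Rnot_le_lt in Hc2].
  all: pose proof (ps_lam mu0 qh a T lo hi e HT HP Hc) as Hlam.
  all: destruct HP as [Hlo [Hhi [Hah [Hla [He Hsq]]]]].
  - simpl in Hpow. exfalso. lra.
  - assert (He2 : 0 < e * e <= 1/2) by nra.
    destruct (IH lo hi (e * e)) as [I1 I2].
    + repeat split; auto; try lra.
      assert (Hp : 0 < / INR T) by (apply Rinv_0_lt_compat; apply (lt_INR 0); lia). nra.
    + replace (2 ^ S f)%nat with (2 ^ f + 2 ^ f)%nat in Hpow by (simpl; lia).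
      rewrite pow_add in Hpow. rewrite Rpow_mult_distr. auto.
    + rewrite lam_sq in I2 by lra.
      replace (lam T e - 1 + 1) with (lam T e) in I2 by ring.
      split; [exact I1|]. eapply Rle_trans; [exact I2|].
      pose proof (C0_pos mu0 qh H0 H1 H2).
      rewrite (Rmax_right 0 (lam T e)) by lra. rewrite (Rmax_right 0 (lam T e + 1)) by lra.
      nra.
Qed.

Lemma Sf_diff mu0 qh a eps m : 0 < mu0 -> mu0 < qh -> qh < 1 -> 0 < eps -> m <= a ->
  C0 mu0 qh * (a - m) <= Sf mu0 qh a eps m - Sf mu0 qh a eps (m + eps).
Proof.
  intros. pose proof (C0_pos mu0 qh H H0 H1). unfold Sf.
  rewrite (Rmax_right 0 (a - m + eps)) by lra.
  rewrite (Rmax_right 0 (a - (m + eps) + eps)) by lra.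
  unfold Rsqr.
  replace (C0 mu0 qh * ((a - m + eps) * (a - m + eps)) / (2 * eps) -
           C0 mu0 qh * ((a - (m + eps) + eps) * (a - (m + eps) + eps)) / (2 * eps))
    with (C0 mu0 qh * (a - m) + C0 mu0 qh * eps / 2) by (field; lra).
  assert (0 < C0 mu0 qh * eps / 2) by (apply Rdiv_lt_0_compat; nra). lra.
Qed.

Lemma exploit_val mu0 qh a T n lo :
  se_value mu0 qh a T n (Exploit lo) = INR n * prob_act1 mu0 qh a (tau mu0 qh lo).
Proof.
  induction n. simpl; ring.
  cbn [se_value]. rewrite IHn, S_INR. ring.
Qed.

Lemma Phi_nonneg mu0 qh a T s : 0 < mu0 -> mu0 < qh -> qh < 1 -> Inv mu0 qh a T s -> 0 <= Phi mu0 qh a T s.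
Proof.
  intros H0 H1 H2 HI. pose proof (C0_pos mu0 qh H0 H1 H2).
  destruct s; simpl in *.
  - destruct HI as [_ [_ [_ [_ [_ [_ [_ He]]]]]]].
    pose proof (Sf_nonneg mu0 qh a eps m H0 H1 H2 ltac:(lra)).
    pose proof (Rmax0_nonneg (lam T eps)). nra.
  - lra.
Qed.

Lemma combine l p X Y R1 R2 : 0 <= p <= 1 -> R1 <= X -> R2 <= Y -> l + p * X <= p * Y ->
  l + p * R1 + (1 - p) * R2 <= Y.
Proof. intros. nra. Qed.

Lemma ind_nonneg b : 0 <= ind b.
Proof. destruct b; simpl; lra. Qed.

Lemma alpha_min_pos mu0 qh : 0 < mu0 -> mu0 < qh -> qh < 1 -> 0 < alpha_min mu0 qh.
Proof. intros. unfold alpha_min. apply Rdiv_lt_0_compat; lra. Qed.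

Lemma exploit_bound mu0 qh a T n lo : 0 < mu0 -> mu0 < qh -> qh < 1 -> 0 < a -> (1 <= T)%nat ->
  (S n <= T)%nat -> Inv mu0 qh a T (Exploit lo) ->
  INR (S n) * (OPTb mu0 qh a - prob_act1 mu0 qh a (tau mu0 qh lo)) <= C0 mu0 qh.
Proof.
  intros H0 H1 H2 Ha HT Hn [Hlo [Hla Hd]].
  pose proof (C0_pos mu0 qh H0 H1 H2) as HC. pose proof (alpha_min_pos mu0 qh H0 H1 H2).
  assert (HTp : 1 <= INR T) by (apply (le_INR 1); auto).
  assert (Hn' : INR (S n) <= INR T) by (apply le_INR; auto).
  assert (0 <= INR (S n)) by apply pos_INR.
  rewrite prob_tau by lra.
  pose proof (g_bounds mu0 qh lo H0 H1 ltac:(lra)) as Hg.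
  unfold OPTb. destruct (Rle_dec (alpha_min mu0 qh) a) as [Hl|Hl].
  - specialize (Hla Hl).
    destruct (acts mu0 qh a (nuB mu0 qh lo)) eqn:E.
    2:{ apply acts_nuB in E; lra. }
    cbn [ind]. rewrite Rmult_1_r.
    pose proof (g_lip mu0 qh a lo H0 H1 H2 Hlo Hla).
    assert (g mu0 qh a - g mu0 qh lo <= C0 mu0 qh * / INR T).
    { apply Rle_trans with (g mu0 qh lo * (C0 mu0 qh * (a - lo))); auto.
      apply Rle_trans with (C0 mu0 qh * (a - lo)).
      - rewrite <- (Rmult_1_l (C0 mu0 qh * (a - lo))) at 2. apply Rmult_le_compat_r; nra.
      - apply Rmult_le_compat_l; lra. }
    assert (0 <= C0 mu0 qh * / INR T) by (apply Rmult_le_pos; [lra|left; apply Rinv_0_lt_compat; lra]).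
    apply Rle_trans with (INR (S n) * (C0 mu0 qh * / INR T)).
    + apply Rmult_le_compat_l; auto.
    + apply Rle_trans with (INR T * (C0 mu0 qh * / INR T)).
      * apply Rmult_le_compat_r; auto.
      * right. field. lra.
  - pose proof (ind_nonneg (acts mu0 qh a (nuB mu0 qh lo))).
    assert (0 <= g mu0 qh lo * ind (acts mu0 qh a (nuB mu0 qh lo))) by (apply Rmult_le_pos; lra). nra.
Qed.

Lemma main_bound mu0 qh a T : 0 < mu0 -> mu0 < qh -> qh < 1 -> 0 < a -> (1 <= T)%nat ->
  forall n, (n <= T)%nat -> forall s, Inv mu0 qh a T s ->
  INR n * OPTb mu0 qh a - se_value mu0 qh a T n s <= Phi mu0 qh a T s.
Proof.
  intros H0 H1 H2 Ha HT.
  pose proof (C0_pos mu0 qh H0 H1 H2) as HC. pose proof (alpha_min_pos mu0 qh H0 H1 H2) as Ham.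
  induction n as [|n IH]; intros Hn s HI.
  - simpl. pose proof (Phi_nonneg mu0 qh a T s H0 H1 H2 HI). lra.
  - assert (IH' := IH ltac:(lia)).
    destruct s as [lo hi eps mprev m | lo].
    2:{ rewrite exploit_val. simpl Phi.
        pose proof (exploit_bound mu0 qh a T n lo H0 H1 H2 Ha HT Hn HI). nra. }
    pose proof HI as HI0.
    destruct HI as [Hlo [Hlm [Hm [Hmh [Hh1 [Hah [Hla [He1 He2]]]]]]]].
    assert (Hm0 : 0 < m) by lra.
    cbn [se_value].
    change (mu0 / nuB mu0 qh m) with (g mu0 qh m).
    rewrite prob_tau by lra.
    change (se_next mu0 qh a T lo hi eps mprev m false) with (Explore lo hi eps mprev m).
    pose proof (g_bounds mu0 qh m H0 H1 Hm0) as Hg.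
    set (G := g mu0 qh m) in *.
    set (V1 := se_value mu0 qh a T n (se_next mu0 qh a T lo hi eps mprev m true)).
    set (V0 := se_value mu0 qh a T n (Explore lo hi eps mprev m)).
    set (Ob := OPTb mu0 qh a).
    replace (INR (S n) * Ob - (G * ind (acts mu0 qh a (nuB mu0 qh m)) + G * V1 + (1 - G) * V0))
      with ((Ob - G * ind (acts mu0 qh a (nuB mu0 qh m))) + G * (INR n * Ob - V1) + (1 - G) * (INR n * Ob - V0))
      by (rewrite S_INR; ring).
    assert (HV0 : INR n * Ob - V0 <= Phi mu0 qh a T (Explore lo hi eps mprev m)) by (apply IH'; auto).
    assert (Hpow : (eps * eps) ^ (2 ^ T) <= / INR T) by (apply pow_small; auto; nra).
    assert (Hlsq : lam T (eps * eps) + 1 = lam T eps) by (rewrite lam_sq by lra; ring).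
    unfold V1. cbn [se_next].
    destruct (acts mu0 qh a (nuB mu0 qh m)) eqn:E.
    + apply acts_nuB in E; auto. cbn [ind]. rewrite Rmult_1_r.
      assert (HOb : Ob = g mu0 qh a).
      { unfold Ob, OPTb. destruct (Rle_dec _ _); auto. lra. }
      assert (Hlip := g_lip mu0 qh a m H0 H1 H2 ltac:(lra) E).
      fold G in Hlip.
      pose proof (Sf_diff mu0 qh a eps m H0 H1 H2 ltac:(lra) E) as HSd.
      destruct (Rle_dec (m + eps) hi) as [Hc|Hc].
      * apply combine with (X := Phi mu0 qh a T (Explore lo hi eps m (m + eps))); [lra| |exact HV0|].
        -- apply IH'; simpl; repeat split; auto; lra.
        -- simpl Phi. rewrite HOb.
           assert (G * (C0 mu0 qh * (a - m)) <= G * (Sf mu0 qh a eps m - Sf mu0 qh a eps (m + eps)))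
             by (apply Rmult_le_compat_l; lra).
           nra.
      * apply Rnot_le_lt in Hc.
        destruct (ps_ok mu0 qh a T T H0 H1 H2 Ha HT m hi (eps * eps)) as [I1 I2]; auto.
        { repeat split; auto; try lra; nra. }
        apply combine with (X := C0 mu0 qh + (C0 mu0 qh + 1) * Rmax 0 (lam T (eps * eps) + 1)); [lra| |exact HV0|].
        -- eapply Rle_trans; [apply IH'; auto|exact I2].
        -- rewrite Hlsq. simpl Phi. rewrite HOb.
           pose proof (Sf_nonneg mu0 qh a eps (m + eps) H0 H1 H2 ltac:(lra)).
           assert (G * (C0 mu0 qh * (a - m)) <= G * (Sf mu0 qh a eps m - Sf mu0 qh a eps (m + eps)))
             by (apply Rmult_le_compat_l; lra).
           nra.
    + apply acts_nuB in E; auto. cbn [ind]. rewrite Rmult_0_r, Rminus_0_r.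
      assert (HOb : Ob <= G).
      { unfold Ob, OPTb, G. destruct (Rle_dec _ _).
        - apply g_mono; lra.
        - pose proof (g_bounds mu0 qh m H0 H1 Hm0); lra. }
      destruct (ps_ok mu0 qh a T T H0 H1 H2 Ha HT mprev m (eps * eps)) as [I1 I2]; auto.
      { repeat split; auto; try lra; try nra. }
      apply combine with (X := C0 mu0 qh + (C0 mu0 qh + 1) * Rmax 0 (lam T (eps * eps) + 1)); [lra| |exact HV0|].
      -- eapply Rle_trans; [apply IH'; auto|exact I2].
      -- rewrite Hlsq. simpl Phi.
         pose proof (Sf_nonneg mu0 qh a eps m H0 H1 H2 ltac:(lra)).
         nra.
Qed.

Lemma ln_le' x y : 0 < x -> x <= y -> ln x <= ln y.
Proof. intros. destruct H0. left; apply ln_increasing; auto. subst; lra. Qed.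

Lemma ln_le_sub1 x : 0 < x -> ln x <= x - 1.
Proof. intros. pose proof (exp_ineq1_le (ln x)). rewrite exp_ln in H0; lra. Qed.

Lemma ln_ge_1inv x : 0 < x -> 1 - / x <= ln x.
Proof.
  intros. pose proof (ln_le_sub1 (/ x) ltac:(apply Rinv_0_lt_compat; auto)).
  rewrite ln_Rinv in H0 by auto. lra.
Qed.

Lemma exp_small : exp (1/10) <= 10/9.
Proof.
  pose proof (exp_ineq1_le (- (1/10))).
  assert (exp (1/10) * exp (- (1/10)) = 1) by (rewrite <- exp_plus; replace (1/10 + - (1/10)) with 0 by ring; apply exp_0).
  pose proof (exp_pos (1/10)). nra.
Qed.

Lemma ln2_ge : 6/10 <= ln 2.
Proof.
  assert (exp (6/10) <= 2).
  { replace (6/10) with (1/10 + 1/10 + 1/10 + 1/10 + 1/10 + 1/10) by field.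
    rewrite !exp_plus. pose proof exp_small. pose proof (exp_pos (1/10)).
    set (z := exp (1/10)) in *.
    assert (z * z * z * z * z * z = z ^ 6) by ring. rewrite H1.
    apply Rle_trans with ((10/9)^6). apply pow_incr; lra. lra. }
  rewrite <- (ln_exp (6/10)). apply ln_le'; auto. apply exp_pos.
Qed.

Lemma numeric T : (4 <= T)%nat ->
  1/6 <= ln (ln (INR T)) /\ lam T (/ 2) + 1 <= 6 + 2 * ln (ln (INR T)).
Proof.
  intros HT.
  assert (H4 : 4 <= INR T) by (replace 4 with (INR 4) by (simpl; ring); apply le_INR; auto).
  pose proof ln2_ge as Hl2.
  assert (HL : 2 * ln 2 <= ln (INR T)).
  { replace (2 * ln 2) with (ln (2 * 2)) by (rewrite ln_mult; lra). apply ln_le'; lra. }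
  set (L := ln (INR T)) in *.
  assert (HL0 : 0 < L) by lra.
  assert (Hu : 1/6 <= ln L).
  { pose proof (ln_ge_1inv L HL0).
    assert (/ L <= / (12/10)) by (apply Rinv_le_contravar; lra). lra. }
  split; auto.
  unfold lam. rewrite Rinv_inv.
  assert (Hln2p : 0 < ln 2) by lra.
  assert (E1 : ln (2 * INR T ^ 2) = ln 2 + 2 * L).
  { rewrite ln_mult by (try lra; apply pow_lt; lra). rewrite ln_pow by lra. simpl INR. unfold L. ring. }
  rewrite E1.
  assert (E2 : ln (ln 2 + 2 * L) <= ln 3 + ln L).
  { rewrite <- ln_mult by lra. apply ln_le'; lra. }
  pose proof (ln_le_sub1 3 ltac:(lra)).
  assert (E3 : - ln (ln 2) <= 2/3).
  { rewrite <- ln_Rinv by lra. pose proof (ln_le_sub1 (/ ln 2) ltac:(apply Rinv_0_lt_compat; lra)).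
    assert (/ ln 2 <= / (6/10)) by (apply Rinv_le_contravar; lra). lra. }
  set (u := ln L) in *.
  assert (N : ln (ln 2 + 2 * L) - ln (ln 2) <= 3 + u) by lra.
  assert ((ln (ln 2 + 2 * L) - ln (ln 2)) / ln 2 <= (3 + u) / (6/10)).
  { apply Rle_trans with ((3 + u) / ln 2).
    - unfold Rdiv. apply Rmult_le_compat_r; auto. left; apply Rinv_0_lt_compat; lra.
    - unfold Rdiv. apply Rmult_le_compat_l; [lra|]. apply Rinv_le_contravar; lra. }
  lra.
Qed.

Theorem proposition3p2 :
  exists K : R, 0 < K /\
    forall mu0 qh : R, 0 < mu0 -> mu0 < qh -> qh < 1 ->
    forall T : nat, (4 <= T)%nat ->
    forall astar : R, 0 < astar -> astar <= 1 ->
      regret_SE mu0 qh astar T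
        <= K * (2 * (1 - mu0) ^ 2 / ((qh - mu0) * qh) + 1) * ln (ln (INR T)).
Proof.
  exists 44. split; [lra|].
  intros mu0 qh H0 H1 H2 T HT a Ha Ha1.
  assert (HT1 : (1 <= T)%nat) by lia.
  pose proof (C0_pos mu0 qh H0 H1 H2) as HC.
  pose proof (alpha_min_pos mu0 qh H0 H1 H2) as Ham.
  assert (Hamle : alpha_min mu0 qh <= 1).
  { unfold alpha_min. apply Rcomplements.Rle_div_l; lra. }
  destruct (ps_ok mu0 qh a T T H0 H1 H2 Ha HT1 (alpha_min mu0 qh) 1 (/ 2)) as [I1 I2].
  { repeat split; try lra. nra. }
  { apply pow_small; auto; lra. }
  pose proof (main_bound mu0 qh a T H0 H1 H2 Ha HT1 T (Nat.le_refl T) _ I1) as M.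
  pose proof (OPT_le mu0 qh a H0 H1 H2 Ha) as HO.
  assert (HTp : 0 <= INR T) by apply pos_INR.
  destruct (numeric T HT) as [Hu Hlam].
  unfold regret_SE, se_init.
  replace (2 * (1 - mu0) ^ 2 / ((qh - mu0) * qh)) with (2 * C0 mu0 qh) by (unfold C0, Rdiv; ring).
  set (u := ln (ln (INR T))) in *.
  assert (INR T * OPT mu0 qh a <= INR T * OPTb mu0 qh a) by (apply Rmult_le_compat_l; auto).
  assert (Rmax 0 (lam T (/ 2) + 1) <= 6 + 2 * u) by (apply Rmax_lub; lra).
  assert ((C0 mu0 qh + 1) * Rmax 0 (lam T (/ 2) + 1) <= (C0 mu0 qh + 1) * (6 + 2 * u))
    by (apply Rmult_le_compat_l; lra).
  nra.
Qed.
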